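(* Let $V$ be a Banach $\mathbb O$-bimodule, $J\in\mathbb S$, and let $T=T_0+J\odot T_1$ and $S=S_0+J\odot S_1$ with $T_0,T_1,S_0,S_1\in\mathscr B_{\mathbb O}(V)$. Then $T\circ S=T\circledcirc S$. Consequently every such $T$ is power-associative, with $T^n=T^{\circledcirc n}$ for all $n$.
   Context: $\mathbb O$ is the real octonion algebra with basis $e_0=1,\dots,e_7$; $\mathbb S=\{J:J^2=-1\}$. An $\mathbb O$-bimodule is a real vector space $M$ with real-bilinear left and right multiplications by $\mathbb O$ (with $1x=x1=x$) whose associators $[p,q,x]=(pq)x-p(qx)$, $[p,x,q]=(px)q-p(xq)$, $[x,p,q]=(xp)q-x(pq)$ satisfy $[p,q,x]=[q,x,p]=[x,p,q]=-[q,p,x]$. $\operatorname{Re}M=\{m: pm=mp,\ [p,q,m]=0\ \forall p,q\}$; every $x=\sum_ix_ie_i$ uniquely with $x_i\in\operatorname{Re}M$, $\operatorname{Re}x:=x_0$. A Banach $\mathbb O$-bimodule has a complete norm with $\|px\|=\|xp\|=|p|\|x\|$. $B_p(f,x)=f(x)p-f(xp)$; $\mathscr B_{\mathcal{RO}}(V)$: bounded real-linear $f$ with $\operatorname{Re}B_p(f,x)=0$ for all $p,x$; $\mathscr B_{\mathbb O}(V)$: bounded octonionic linear operators ($f(xp)=f(x)p$). $(p\odot f)(x)=pf(x)+B_p(f,x)$. For $f,g\in\mathscr B_{\mathcal{RO}}(V)$, $f\circledcirc g=\operatorname{ext}((f\circ g)|_{\operatorname{Re}V})$ where $(\operatorname{ext}h)(\sum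 x_ie_i)=\sum h(x_i)e_i$ ($x_i\in\operatorname{Re}V$). $T^{\circledcirc n}=\operatorname{ext}(T^n|_{\operatorname{Re}V})$, $T^n$ the ordinary power. $T$ is power-associative if $T^n\in\mathscr B_{\mathcal{RO}}(V)$ for all $n$. *)

(* Defs.v *)
From HB Require Import structures.
From mathcomp Require Import all_boot all_order all_algebra.
From mathcomp Require Import all_classical all_reals all_analysis.
From Stdlib Require Import ClassicalEpsilon.
Set Implicit Arguments. Unset Strict Implicit. Unset Printing Implicit Defensive.
Import Order.TTheory GRing.Theory Num.Theory.
Import numFieldNormedType.Exports.
Local Open Scope ring_scope.

Definition Oct (R : realType) := 'rV[R]_8.

(* Multiplication table (Baez convention e_i e_{i+1} = e_{i+3}, indices mod 7):
   otab i j = (sign, k) means e_i e_j = sign * e_k. *)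
Definition otab_sign (d : nat) : bool := (* true = +, false = - *)
  (d == 1)%N || (d == 2)%N || (d == 4)%N.
Definition otab_off (d : nat) : nat :=
  match d with 1 => 3 | 2 => 6 | 3 => 1 | 4 => 5 | 5 => 4 | _ => 2 end%N.
Definition otab_idx (i j : nat) : nat :=
  if i == 0%N then j else if j == 0%N then i else if i == j then 0%N
  else ((i.-1 + otab_off ((j + 7 - i) %% 7)) %% 7).+1.
Definition otab_sgn (R : realType) (i j : nat) : R :=
  if i == 0%N then 1 else if j == 0%N then 1 else if i == j then -1
  else if otab_sign ((j + 7 - i) %% 7) then 1 else -1.

Definition oe (R : realType) (i : 'I_8) : Oct R := \row_k (if k == i then 1 else 0).
Definition oone (R : realType) : Oct R := oe R ord0.

Definition omul (R : realType) (p q : Oct R) : Oct R :=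
  \row_(k < 8) \sum_(i < 8) \sum_(j < 8)
     (if otab_idx i j == (k : nat) then otab_sgn R i j * p ord0 i * q ord0 j else 0).

Definition onorm (R : realType) (p : Oct R) : R := Num.sqrt (\sum_(i < 8) p ord0 i ^+ 2).

Definition OctS (R : realType) (J : Oct R) : Prop := omul J J = - oone R.

Section Bimod.
Variables (R : realType) (V : normedModType R).
Variables (lm : Oct R -> V -> V) (rm : V -> Oct R -> V).

Definition assoc_l (p q : Oct R) (x : V) : V := lm (omul p q) x - lm p (lm q x).
Definition assoc_m (p : Oct R) (x : V) (q : Oct R) : V := rm (lm p x) q - lm p (rm x q).
Definition assoc_r (x : V) (p q : Oct R) : V := rm (rm x p) q - rm x (omul p q).

Definition lm_bilinear : Prop :=
  [/\ (forall p q x, lm (p + q) x = lm p x + lm q x),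
      (forall (r : R) p x, lm (r *: p) x = r *: lm p x),
      (forall p x y, lm p (x + y) = lm p x + lm p y) &
      (forall (r : R) p x, lm p (r *: x) = r *: lm p x)].
Definition rm_bilinear : Prop :=
  [/\ (forall p q x, rm x (p + q) = rm x p + rm x q),
      (forall (r : R) p x, rm x (r *: p) = r *: rm x p),
      (forall p x y, rm (x + y) p = rm x p + rm y p) &
      (forall (r : R) p x, rm (r *: x) p = r *: rm x p)].

Definition is_Obimodule : Prop :=
  [/\ lm_bilinear, rm_bilinear,
      (forall x, lm (oone R) x = x /\ rm x (oone R) = x) &
      (forall p q x,
         assoc_l p q x = assoc_m q x p /\ assoc_m q x p = assoc_r x p q /\
         assoc_r x p q = - assoc_l q p x)].

Definition is_BanachObimodule : Prop :=
  [/\ is_Obimodule,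
      (forall p x, `|lm p x| = onorm p * `|x|) &
      (forall p x, `|rm x p| = onorm p * `|x|)].
(* completeness of the norm is imposed by taking V : completeNormedModType R *)

Definition ReV (m : V) : Prop :=
  (forall p, lm p m = rm m p) /\ (forall p q, assoc_l p q m = 0).

Definition is_decomp (x : V) (c : 'I_8 -> V) : Prop :=
  (forall i, ReV (c i)) /\ x = \sum_(i < 8) rm (c i) (oe R i).

(* the (unique, by the standing facts) components x_i *)
Definition ocomp (x : V) : 'I_8 -> V :=
  epsilon (inhabits (fun _ : 'I_8 => (0 : V))) (is_decomp x).

Definition ReOf (x : V) : V := ocomp x ord0.

Definition oext (h : V -> V) (x : V) : V :=
  \sum_(i < 8) rm (h (ocomp x i)) (oe R i).

Definition Bp (p : Oct R) (f : V -> V) (x : V) : V := rm (f x) p - f (rm x p).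

Definition real_linear (f : V -> V) : Prop :=
  (forall x y, f (x + y) = f x + f y) /\ (forall (r : R) x, f (r *: x) = r *: f x).
Definition bounded_op (f : V -> V) : Prop :=
  exists M : R, forall x, `|f x| <= M * `|x|.

Definition B_RO (f : V -> V) : Prop :=
  [/\ real_linear f, bounded_op f & forall p x, ReOf (Bp p f x) = 0].

Definition B_O (f : V -> V) : Prop :=
  [/\ real_linear f, bounded_op f & forall x p, f (rm x p) = rm (f x) p].

Definition odot (p : Oct R) (f : V -> V) : V -> V := fun x => lm p (f x) + Bp p f x.

(* f ⊚ g = ext((f ∘ g)|_{Re V}) *)
Definition ocirc (f g : V -> V) : V -> V := oext (f \o g).

Definition opow (T : V -> V) (n : nat) : V -> V := oext (iter n T).

Definition power_associative (T : V -> V) : Prop := forall n, B_RO (iter n T).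

End Bimod.

(* Main.v *)
Require Import Defs.
From HB Require Import structures.
From mathcomp Require Import all_boot all_order all_algebra.
From mathcomp Require Import all_classical all_reals all_analysis.
From Stdlib Require Import ClassicalEpsilon.
Import Order.TTheory GRing.Theory Num.Theory.
Import numFieldNormedType.Exports.
Local Open Scope ring_scope.


Definition zs (i j : nat) : int :=
  if i == 0%N then 1 else if j == 0%N then 1 else if i == j then -1
  else if otab_sign ((j + 7 - i) %% 7) then 1 else -1.
Definition b2z (b : bool) : int := if b then 1 else 0.
Definition coefn (i a b k : nat) : int :=
  zs i a * zs (otab_idx i a) b * b2z (otab_idx (otab_idx i a) b == k)
  - zs a b * zs i (otab_idx a b) * b2z (otab_idx i (otab_idx a b) == k).
Definition I8 := iota 0 8.

Lemma idx_lt : all (fun i => all (fun j => otab_idx i j < 8)%N I8) I8.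
Proof. by vm_compute. Qed.

Lemma reassoc : all (fun i => all (fun j => all (fun k =>
  zs i j * zs (otab_idx i j) k * b2z (otab_idx (otab_idx i j) k == 0%N) ==
  zs j k * zs i (otab_idx j k) * b2z (otab_idx i (otab_idx j k) == 0%N)) I8) I8) I8.
Proof. by vm_compute. Qed.

Lemma nucl : all (fun j => (j != 0%N) ==> has (fun a => has (fun b => has (fun k =>
   all (fun i => (coefn i a b k != 0) == (i == j)) I8) I8) I8) I8) I8.
Proof. by vm_compute. Qed.

Lemma memI8 (i : 'I_8) : (i : nat) \in I8.
Proof. by rewrite mem_iota add0n leq0n ltn_ord. Qed.
Lemma idx_lt' (i j : 'I_8) : (otab_idx i j < 8)%N.
Proof. by have := allP idx_lt _ (memI8 i) => /allP /(_ _ (memI8 j)). Qed.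
Definition oidx (i j : 'I_8) : 'I_8 := inord (otab_idx i j).
Lemma oidxE (i j : 'I_8) : (oidx i j : nat) = otab_idx i j.
Proof. exact: inordK (idx_lt' i j). Qed.

Section Main.
Variables (R : realType) (V : completeNormedModType R)
  (lm : Oct R -> V -> V) (rm : V -> Oct R -> V).
Hypothesis HV : is_BanachObimodule lm rm.
Hypothesis Hdec : forall x : V, exists! c : 'I_8 -> V, is_decomp lm rm x c.

Let isRe := Defs.ReV lm rm.

Lemma HO : is_Obimodule lm rm. Proof. by case: HV. Qed.
Lemma lmxD p x y : lm p (x + y) = lm p x + lm p y.
Proof. by case: HO => -[]. Qed.
Lemma lmxZ (r : R) p x : lm p (r *: x) = r *: lm p x.
Proof. by case: HO => -[]. Qed.
Lemma lmD p q x : lm (p + q) x = lm p x + lm q x.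
Proof. by case: HO => -[]. Qed.
Lemma lmZ (r : R) p x : lm (r *: p) x = r *: lm p x.
Proof. by case: HO => -[]. Qed.
Lemma rmxD p x y : rm (x + y) p = rm x p + rm y p.
Proof. by case: HO => _ []. Qed.
Lemma rmxZ (r : R) p x : rm (r *: x) p = r *: rm x p.
Proof. by case: HO => _ []. Qed.
Lemma rmD p q x : rm x (p + q) = rm x p + rm x q.
Proof. by case: HO => _ []. Qed.
Lemma rmZ (r : R) p x : rm x (r *: p) = r *: rm x p.
Proof. by case: HO => _ []. Qed.
Lemma lm1 x : lm (oone R) x = x.
Proof. by case: HO => _ _ H _; case: (H x). Qed.
Lemma rm1 x : rm x (oone R) = x.
Proof. by case: HO => _ _ H _; case: (H x). Qed.
Lemma Aid p q x : [/\ assoc_l lm p q x = assoc_m lm rm q x p,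
  assoc_m lm rm q x p = assoc_r rm x p q & assoc_r rm x p q = - assoc_l lm q p x].
Proof. by case: HO => _ _ _ H; case: (H p q x) => [? []]. Qed.

Lemma lmx0 p : lm p 0 = 0.
Proof. by have := lmxZ 0 p 0; rewrite !scale0r. Qed.
Lemma lmxN p x : lm p (- x) = - lm p x.
Proof. by rewrite -scaleN1r lmxZ scaleN1r. Qed.
Lemma lmxB p x y : lm p (x - y) = lm p x - lm p y.
Proof. by rewrite lmxD lmxN. Qed.
Lemma lmx_sum p (I : Type) (s : seq I) (P : pred I) (F : I -> V) :
  lm p (\sum_(i <- s | P i) F i) = \sum_(i <- s | P i) lm p (F i).
Proof. exact: (big_morph (lm p) (lmxD p) (lmx0 p)). Qed.
Lemma lmN p x : lm (- p) x = - lm p x.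
Proof. by rewrite -scaleN1r lmZ scaleN1r. Qed.
Lemma rmx0 p : rm 0 p = 0.
Proof. by have := rmxZ 0 p 0; rewrite !scale0r. Qed.
Lemma rmxN p x : rm (- x) p = - rm x p.
Proof. by rewrite -scaleN1r rmxZ scaleN1r. Qed.
Lemma rmxB p x y : rm (x - y) p = rm x p - rm y p.
Proof. by rewrite rmxD rmxN. Qed.
Lemma rmx_sum p (I : Type) (s : seq I) (P : pred I) (F : I -> V) :
  rm (\sum_(i <- s | P i) F i) p = \sum_(i <- s | P i) rm (F i) p.
Proof. exact: (big_morph (rm^~ p) (rmxD p) (rmx0 p)). Qed.
Lemma rm0 x : rm x 0 = 0.
Proof. by have := rmZ 0 0 x; rewrite !scale0r. Qed.
Lemma rmN p x : rm x (- p) = - rm x p.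
Proof. by rewrite -scaleN1r rmZ scaleN1r. Qed.
Lemma rmB p q x : rm x (p - q) = rm x p - rm x q.
Proof. by rewrite rmD rmN. Qed.
Lemma rm_sum x (I : Type) (s : seq I) (P : pred I) (F : I -> Oct R) :
  rm x (\sum_(i <- s | P i) F i) = \sum_(i <- s | P i) rm x (F i).
Proof. exact: (big_morph (rm x) (fun p q => rmD p q x) (rm0 x)). Qed.

Lemma R1 u p q : isRe u -> rm (rm u p) q = rm u (omul p q).
Proof.
case=> _ H; have [e1 e2 _] := Aid p q u.
by apply/eqP; rewrite -subr_eq0; apply/eqP; rewrite -[LHS]/(assoc_r rm u p q) -e2 -e1 H.
Qed.
Lemma R2 u p q : isRe u -> lm p (rm u q) = rm u (omul p q).
Proof.
case=> Hc H; rewrite -Hc -[RHS]Hc; apply/eqP; rewrite -subr_eq0 -opprB oppr_eq0.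
by apply/eqP; exact: H.
Qed.
Lemma Re0 : isRe 0.
Proof. split=> [p|p q]; first by rewrite lmx0 rmx0. by rewrite /assoc_l !lmx0 subr0. Qed.
Lemma ReD u v : isRe u -> isRe v -> isRe (u + v).
Proof.
move=> [c1 a1] [c2 a2]; split=> [p|p q]; first by rewrite lmxD rmxD c1 c2.
have -> : assoc_l lm p q (u + v) = assoc_l lm p q u + assoc_l lm p q v.
  by rewrite /assoc_l !lmxD; rewrite opprD addrACA.
by rewrite a1 a2 addr0.
Qed.

Lemma ReZ (r : R) u : isRe u -> isRe (r *: u).
Proof.
move=> [c1 a1]; split=> [p|p q]; first by rewrite lmxZ rmxZ c1.
by rewrite /assoc_l !lmxZ -scalerBr -/(assoc_l lm p q u) a1 scaler0.
Qed.
Lemma Re_sum (I : Type) (s : seq I) (P : pred I) (F : I -> V) :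
  (forall i, P i -> isRe (F i)) -> isRe (\sum_(i <- s | P i) F i).
Proof. move=> H; apply: big_ind => //; [exact: Re0 | exact: ReD]. Qed.

Lemma ocomp_dec x : is_decomp lm rm x (ocomp lm rm x).
Proof.
rewrite /ocomp; apply: epsilon_spec; have [c [Hc _]] := Hdec x; by exists c.
Qed.
Lemma dec_uniq x c c' : is_decomp lm rm x c -> is_decomp lm rm x c' -> c = c'.
Proof.
move=> H1 H2; have [c0 [_ U]] := Hdec x; by rewrite -(U _ H1) -(U _ H2).
Qed.
Lemma ocomp_uniq x c : is_decomp lm rm x c -> ocomp lm rm x = c.
Proof. by move=> H; apply: dec_uniq (ocomp_dec x) H. Qed.
Lemma ocompRe x i : isRe (ocomp lm rm x i).
Proof. by case: (ocomp_dec x) => H _; apply: H. Qed.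
Lemma ocompE x : x = \sum_(i < 8) rm (ocomp lm rm x i) (oe R i).
Proof. by case: (ocomp_dec x) => _ H. Qed.

Lemma oexp (p : Oct R) : p = \sum_(k < 8) p ord0 k *: oe R k.
Proof.
apply/rowP => k; rewrite summxE (bigD1 k) //= big1 ?addr0.
  by rewrite !mxE eqxx mulr1.
by move=> i ni; rewrite !mxE eq_sym (negbTE ni) mulr0.
Qed.

Lemma rm_exp w (o : Oct R) : rm w o = \sum_(k < 8) rm (o ord0 k *: w) (oe R k).
Proof.
by rewrite {1}(oexp o) rm_sum; apply: eq_bigr => k _; rewrite rmZ rmxZ.
Qed.

Lemma decG (w : 'I_8 -> V) (o : 'I_8 -> Oct R) : (forall i, isRe (w i)) ->
  is_decomp lm rm (\sum_(i < 8) rm (w i) (o i)) (fun k => \sum_(i < 8) o i ord0 k *: w i).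
Proof.
move=> Hw; split=> [k|]; first by apply: Re_sum => i _; apply: ReZ.
under eq_bigr do rewrite rm_exp.
by rewrite exchange_big /=; apply: eq_bigr => k _; rewrite rmx_sum.
Qed.

Lemma omulDl q : {morph (fun p : Oct R => omul p q) : x y / x + y}.
Proof.
move=> x y; apply/rowP => k; rewrite !mxE -big_split; apply: eq_bigr => i _.
rewrite -big_split; apply: eq_bigr => j _; rewrite !mxE.
by case: (otab_idx i j == k) => /=; rewrite ?addr0 // mulrDr mulrDl.
Qed.
Lemma omulDr p : {morph (fun q : Oct R => omul p q) : x y / x + y}.
Proof.
move=> x y; apply/rowP => k; rewrite !mxE -big_split; apply: eq_bigr => i _.
rewrite -big_split; apply: eq_bigr => j _; rewrite !mxE.
by case: (otab_idx i j == k) => /=; rewrite ?addr0 // mulrDr.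
Qed.
Lemma omulZl (r : R) p q : omul (r *: p) q = r *: omul p q.
Proof.
apply/rowP => k; rewrite !mxE mulr_sumr; apply: eq_bigr => i _.
rewrite mulr_sumr; apply: eq_bigr => j _; rewrite !mxE.
by case: (otab_idx i j == k) => /=; rewrite ?mulr0 // !mulrA [_ * r]mulrC.
Qed.
Lemma omulZr (r : R) p q : omul p (r *: q) = r *: omul p q.
Proof.
apply/rowP => k; rewrite !mxE mulr_sumr; apply: eq_bigr => i _.
rewrite mulr_sumr; apply: eq_bigr => j _; rewrite !mxE.
by case: (otab_idx i j == k) => /=; rewrite ?mulr0 // mulrCA.
Qed.
Lemma omul0l (q : Oct R) : omul 0 q = 0.
Proof. by have := omulZl 0 0 q; rewrite !scale0r. Qed.
Lemma omul0r (p : Oct R) : omul p 0 = 0.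
Proof. by have := omulZr 0 p 0; rewrite !scale0r. Qed.
Lemma omul_suml q (I : Type) (s : seq I) (P : pred I) (F : I -> Oct R) :
  omul (\sum_(i <- s | P i) F i) q = \sum_(i <- s | P i) omul (F i) q.
Proof. exact: (big_morph (fun p : Oct R => omul p q) (omulDl q) (omul0l q)). Qed.
Lemma omul_sumr p (I : Type) (s : seq I) (P : pred I) (F : I -> Oct R) :
  omul p (\sum_(i <- s | P i) F i) = \sum_(i <- s | P i) omul p (F i).
Proof. exact: (big_morph (fun q : Oct R => omul p q) (omulDr p) (omul0r p)). Qed.


Lemma sgnE (i j : nat) : otab_sgn R i j = (zs i j)%:~R.
Proof. by rewrite /otab_sgn /zs; do 4 (case: ifP => _) => //=; rewrite ?rmorphN. Qed.
Lemma oeE (x k : 'I_8) : (oe R x) ord0 k = (b2z (x == k))%:~R.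
Proof. by rewrite mxE eq_sym; case: (x == k). Qed.

Lemma ifE (x k : 'I_8) : (if k == x then 1 else 0 : R) = (b2z (x == k))%:~R.
Proof. by rewrite eq_sym; case: (x == k). Qed.

Lemma C1 (i j : 'I_8) : omul (oe R i) (oe R j) = (zs i j)%:~R *: oe R (oidx i j).
Proof.
apply/rowP => k; rewrite !mxE (bigD1 i) //= [X in _ + X]big1 ?addr0; last first.
  move=> i' ni; apply: big1 => j' _; rewrite !mxE (negbTE ni).
  by case: (otab_idx i' j' == k); rewrite ?mulr0 ?mul0r.
rewrite (bigD1 j) //= [X in _ + X]big1 ?addr0; last first.
  move=> j' nj; rewrite !mxE (negbTE nj).
  by case: (otab_idx i j' == k); rewrite ?mulr0 ?mul0r.
rewrite !mxE !eqxx !mulr1 sgnE.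
have -> : (k == oidx i j) = (otab_idx i j == k).
  by rewrite eq_sym -val_eqE /= oidxE.
by case: (otab_idx i j == k); rewrite ?mulr1 ?mulr0.
Qed.


Lemma ORe (a b c : 'I_8) :
  (omul (omul (oe R a) (oe R b)) (oe R c) - omul (oe R a) (omul (oe R b) (oe R c))) ord0 ord0 = 0.
Proof.
rewrite !(C1, omulZl, omulZr) !scalerA !mxE !ifE -!val_eqE /= !oidxE.
rewrite -!intrM -intrB; apply/eqP; rewrite intr_eq0 subr_eq0.
by have := allP reassoc _ (memI8 a) => /allP /(_ _ (memI8 b)) /allP /(_ _ (memI8 c)).
Qed.

Lemma Ocoef (i a b k : 'I_8) :
  (omul (omul (oe R i) (oe R a)) (oe R b) - omul (oe R i) (omul (oe R a) (oe R b))) ord0 k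
  = (coefn i a b k)%:~R.
Proof.
rewrite !(C1, omulZl, omulZr) !scalerA !mxE !ifE -!val_eqE /= !oidxE.
by rewrite -!intrM -intrB.
Qed.

Lemma ORe_gen (J p : Oct R) (e : 'I_8) :
  (omul (omul J (oe R e)) p - omul J (omul (oe R e) p)) ord0 ord0 = 0.
Proof.
have E1 : omul (omul J (oe R e)) p = \sum_a \sum_b (J ord0 a * p ord0 b) *:
    omul (omul (oe R a) (oe R e)) (oe R b).
  rewrite {1}(oexp J) !omul_suml; apply: eq_bigr => a _.
  rewrite !omulZl {1}(oexp p) omul_sumr scaler_sumr; apply: eq_bigr => b _.
  by rewrite omulZr scalerA.
have E2 : omul J (omul (oe R e) p) = \sum_a \sum_b (J ord0 a * p ord0 b) *:
    omul (oe R a) (omul (oe R e) (oe R b)).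
  rewrite {1}(oexp J) !omul_suml; apply: eq_bigr => a _.
  rewrite !omulZl {1}(oexp p) !omul_sumr scaler_sumr; apply: eq_bigr => b _.
  by rewrite !omulZr scalerA.
rewrite E1 E2 -sumrB summxE big1 // => a _.
rewrite -sumrB summxE big1 // => b _.
by rewrite -scalerBr mxE ORe mulr0.
Qed.


Lemma BO_D {f} : B_O rm f -> forall x y, f (x + y) = f x + f y.
Proof. by case=> -[]. Qed.
Lemma BO_Z {f} : B_O rm f -> forall (r : R) x, f (r *: x) = r *: f x.
Proof. by case=> -[]. Qed.
Lemma BO_rm {f} : B_O rm f -> forall x p, f (rm x p) = rm (f x) p.
Proof. by case. Qed.
Lemma BO_0 {f} : B_O rm f -> f 0 = 0.
Proof. by move=> H; have := BO_Z H 0 0; rewrite !scale0r. Qed.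
Lemma BO_sum {f} (I : Type) (s : seq I) (P : pred I) (F : I -> V) : B_O rm f ->
  f (\sum_(i <- s | P i) F i) = \sum_(i <- s | P i) f (F i).
Proof. by move=> H; apply: (big_morph f (BO_D H) (BO_0 H)). Qed.

Lemma dec0 : is_decomp lm rm 0 (fun _ => 0).
Proof. by split=> [_|]; [exact: Re0 | rewrite big1 // => i _; rewrite rmx0]. Qed.

Lemma ReB f u : B_O rm f -> isRe u -> isRe (f u).
Proof.
move=> Hf Hu; set m := f u; set w := ocomp lm rm m.
have Hw : forall i, isRe (w i) by move=> i; exact: ocompRe.
have Hm : forall (a b : 'I_8), \sum_(i < 8) rm (w i)
   (omul (omul (oe R i) (oe R a)) (oe R b) - omul (oe R i) (omul (oe R a) (oe R b))) = 0.
  move=> a b.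
  have H0 : rm (rm m (oe R a)) (oe R b) - rm m (omul (oe R a) (oe R b)) = 0.
    by rewrite /m -!(BO_rm Hf) R1 // subrr.
  apply: etrans H0; rewrite [in RHS](ocompE m) !rmx_sum -sumrB; apply: eq_bigr => i _.
  by have Wi := Hw i; rewrite rmB (R1 _ (oe R i) (oe R a) Wi) !(R1 _ _ _ Wi).
have Hc : forall (a b k : 'I_8), \sum_(i < 8) (coefn i a b k)%:~R *: w i = 0.
  move=> a b k.
  have D := decG w (fun i => omul (omul (oe R i) (oe R a)) (oe R b) - omul (oe R i) (omul (oe R a) (oe R b))) Hw.
  rewrite Hm in D; have := dec_uniq _ _ _ D dec0.
  move=> /(congr1 (fun c => c k)) /= E; apply: (etrans _ E); apply: eq_bigr => i _.
  by rewrite Ocoef.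
have Hz : forall j : 'I_8, j != ord0 -> w j = 0.
  move=> j nj; have := allP nucl _ (memI8 j) => /implyP /(_ nj).
  case/hasP => a aI /hasP [b bI /hasP [k kI /allP Hall]].
  have ltI : forall n, n \in I8 -> (n < 8)%N by move=> n; rewrite mem_iota.
  have := Hc (inord a) (inord b) (inord k).
  rewrite (bigD1 j) //= big1 ?addr0; last first.
    move=> i; rewrite -val_eqE /= => ni; have := Hall _ (memI8 i).
    rewrite !inordK ?ltI // (negbTE ni) => /eqP/negbFE/eqP ->.
    by rewrite scale0r.
  move/eqP; rewrite scaler_eq0 => /orP [|/eqP //].
  rewrite intr_eq0 !inordK ?ltI //; have := Hall _ (memI8 j); rewrite eqxx.
  by move=> /eqP H /eqP H'; rewrite H' eqxx in H.
have -> : m = w ord0.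
  rewrite {1}(ocompE m) -/w (bigD1 ord0) //= big1 ?addr0; first by rewrite rm1.
  by move=> i ni; rewrite Hz // rmx0.
exact: Hw.
Qed.

Lemma BO_lm {f} p z : B_O rm f -> f (lm p z) = lm p (f z).
Proof.
move=> Hf; rewrite (ocompE z) lmx_sum !(BO_sum _ _ _ _ Hf) lmx_sum.
apply: eq_bigr => i _; rewrite (BO_rm Hf) R2 ?R2 ?(BO_rm Hf) //; last exact: ocompRe.
by apply: ReB => //; exact: ocompRe.
Qed.


Lemma bnd_pos (f : V -> V) : bounded_op f -> exists M : R, 0 <= M /\ forall x, `|f x| <= M * `|x|.
Proof.
case=> M HM; exists `|M|; split => // x; apply: (le_trans (HM x)).
by apply: ler_wpM2r => //; exact: ler_norm.
Qed.

Lemma BO_id : B_O rm id.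
Proof. split => //; by exists 1 => x; rewrite mul1r. Qed.
Lemma BO_comp A C : B_O rm A -> B_O rm C -> B_O rm (A \o C).
Proof.
move=> HA HC; split.
- by split=> [x y|r x] /=; rewrite ?(BO_D HC) ?(BO_D HA) ?(BO_Z HC) ?(BO_Z HA).
- case: HA => _ /bnd_pos [Ma [Ma0 HMa]] _; case: HC => _ /bnd_pos [Mc [Mc0 HMc]] _.
  exists (Ma * Mc) => x /=; apply: (le_trans (HMa _)); rewrite -mulrA.
  by apply: ler_wpM2l.
- by move=> x p /=; rewrite (BO_rm HC) (BO_rm HA).
Qed.
Lemma BO_add A B : B_O rm A -> B_O rm B -> B_O rm (fun x => A x + B x).
Proof.
move=> HA HB; split.
- split=> [x y|r x]; rewrite ?(BO_D HB) ?(BO_D HA) ?(BO_Z HB) ?(BO_Z HA) ?scalerDr //.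
  by rewrite addrACA.
- case: HA => _ /bnd_pos [Ma [Ma0 HMa]] _; case: HB => _ /bnd_pos [Mb [Mb0 HMb]] _.
  exists (Ma + Mb) => x; apply: (le_trans (ler_normD _ _)); rewrite mulrDl.
  exact: lerD.
- by move=> x p; rewrite (BO_rm HB) (BO_rm HA) rmxD.
Qed.
Lemma BO_opp A : B_O rm A -> B_O rm (fun x => - A x).
Proof.
move=> HA; split.
- split=> [x y|r x]; rewrite ?(BO_D HA) ?(BO_Z HA) ?opprD //.
  by rewrite scalerN.
- case: HA => _ [M HM] _; exists M => x; rewrite normrN; exact: HM.
- by move=> x p; rewrite (BO_rm HA) rmxN.
Qed.
Lemma BO_zero : B_O rm (fun _ => 0).
Proof.
split.
- by split=> [x y|r x]; rewrite ?addr0 ?scaler0.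
- by exists 0 => x; rewrite normr0 mul0r.
- by move=> x p; rewrite rmx0.
Qed.

Variable J : Oct R.
Hypothesis HJ : OctS J.

Lemma LJJ y : lm J (lm J y) = - y.
Proof.
have [e1 e2 e3] := Aid J J y.
have a0 : assoc_l lm J J y = 0.
  have H : assoc_l lm J J y = - assoc_l lm J J y := etrans e1 (etrans e2 e3).
  have : (2%:R : R) *: assoc_l lm J J y = 0.
    by rewrite scaler_nat mulr2n {1}H addNr.
  by move/eqP; rewrite scaler_eq0 pnatr_eq0 /= => /eqP.
move: a0; rewrite /assoc_l HJ lmN lm1 => /eqP; rewrite subr_eq0 => /eqP <-.
by [].
Qed.


Lemma LJrm u e : isRe u -> lm J (rm u e) = rm (lm J u) e.
Proof. by move=> Hu; rewrite R2 //; case: (Hu) => -> _; rewrite R1. Qed.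

Definition inC (f : V -> V) := exists A B, [/\ B_O rm A, B_O rm B &
  forall x, f x = A x + lm J (B x)].

Lemma inC_id : inC id.
Proof. by exists id, (fun _ => 0); split; [exact: BO_id|exact: BO_zero|move=> x; rewrite lmx0 addr0]. Qed.

Lemma inC_comp f g : inC f -> inC g -> inC (f \o g).
Proof.
move=> [A [B [HA HB Hf]]] [C [D [HC HD Hg]]].
exists (fun x => (A \o C) x + - (B \o D) x), (fun x => (A \o D) x + (B \o C) x); split.
- by apply: BO_add; [apply: BO_comp | apply: BO_opp; apply: BO_comp].
- by apply: BO_add; apply: BO_comp.
move=> x /=; rewrite Hf Hg (BO_D HA) (BO_lm _ _ HA) (BO_D HB) (BO_lm _ _ HB) lmxD LJJ lmxD.
rewrite -!addrA; congr (_ + _); by rewrite [RHS]addrC -addrA.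
Qed.

Lemma inC_oext f : inC f -> forall x, f x = oext lm rm f x.
Proof.
move=> [A [B [HA HB Hf]]] x; rewrite /oext Hf.
under [RHS]eq_bigr do rewrite Hf rmxD.
rewrite big_split /=; congr (_ + _).
  by rewrite {1}(ocompE x) (BO_sum _ _ _ _ HA); apply: eq_bigr => i _; rewrite (BO_rm HA).
rewrite {1}(ocompE x) (BO_sum _ _ _ _ HB) lmx_sum; apply: eq_bigr => i _.
by rewrite (BO_rm HB) LJrm //; apply: ReB => //; exact: ocompRe.
Qed.


Lemma assocm_dec y p : rm (lm J y) p - lm J (rm y p) =
  \sum_(i < 8) rm (ocomp lm rm y i)
     (omul (omul J (oe R i)) p - omul J (omul (oe R i) p)).
Proof.
set w := ocomp lm rm y; rewrite {1 2}(ocompE y) -/w lmx_sum !rmx_sum lmx_sum -sumrB.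
apply: eq_bigr => i _; have Wi : isRe (w i) by exact: ocompRe.
by rewrite (R2 _ _ _ Wi) (R1 _ _ _ Wi) (R1 _ _ _ Wi) (R2 _ _ _ Wi) rmB.
Qed.

Lemma ReOf_assocm y p : ReOf lm rm (rm (lm J y) p - lm J (rm y p)) = 0.
Proof.
rewrite /ReOf assocm_dec (ocomp_uniq _ _ (decG _ _ (ocompRe y))).
by rewrite big1 // => i _; rewrite ORe_gen scale0r.
Qed.

Lemma inC_BRO f : inC f -> B_RO lm rm f.
Proof.
move=> [A [B [HA HB Hf]]]; split.
- split=> [x y|r x]; rewrite !Hf.
    by rewrite (BO_D HA) (BO_D HB) lmxD addrACA.
  by rewrite (BO_Z HA) (BO_Z HB) lmxZ scalerDr.
- case: HA => _ /bnd_pos [Ma [Ma0 HMa]] _; case: HB => _ /bnd_pos [Mb [Mb0 HMb]] _.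
  exists (Ma + onorm J * Mb) => x; rewrite Hf; apply: (le_trans (ler_normD _ _)).
  have [_ Hn _] := HV; rewrite Hn mulrDl -mulrA; apply: lerD => //.
  by apply: ler_wpM2l => //; rewrite /onorm sqrtr_ge0.
- move=> p x; rewrite /Bp !Hf (BO_rm HA) (BO_rm HB) rmxD opprD addrACA subrr add0r.
  exact: ReOf_assocm.
Qed.

End Main.

Theorem mainTheorem16 (R : realType) (V : completeNormedModType R)
  (lm : Oct R -> V -> V) (rm : V -> Oct R -> V)
  (HV : is_BanachObimodule lm rm)
  (Hdec : forall x : V, exists! c : 'I_8 -> V, is_decomp lm rm x c)
  (J : Oct R) (HJ : OctS J)
  (T0 T1 S0 S1 : V -> V)
  (hT0 : B_O rm T0) (hT1 : B_O rm T1) (hS0 : B_O rm S0) (hS1 : B_O rm S1) :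
  let T := fun x => T0 x + odot lm rm J T1 x in
  let S := fun x => S0 x + odot lm rm J S1 x in
  (T \o S = ocirc lm rm T S) /\
  (power_associative lm rm T /\ forall n : nat, iter n T = opow lm rm T n).
Proof.
move=> T S.
have CT : inC R V lm rm J T.
  exists T0, T1; split => // x.
  by rewrite /T /odot /Bp (BO_rm _ _ _ hT1) subrr addr0.
have CS : inC R V lm rm J S.
  exists S0, S1; split => // x.
  by rewrite /S /odot /Bp (BO_rm _ _ _ hS1) subrr addr0.
have Cn : forall n, inC R V lm rm J (iter n T).
  elim=> [|n IH]; first exact: (inC_id _ _ _ _ HV).
  have -> : iter n.+1 T = T \o iter n T by apply: funext => x; rewrite iterS.
  exact: (inC_comp _ _ _ _ HV Hdec _ HJ _ _).
split; first by apply: funext => x; rewrite /ocirc -(inC_oext _ _ _ _ HV Hdec _ _ (inC_comp _ _ _ _ HV Hdec _ HJ _ _ CT CS)).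
split; first by move=> n; apply: (inC_BRO _ _ _ _ HV Hdec _ _ (Cn n)).
by move=> n; apply: funext => x; rewrite /opow -(inC_oext _ _ _ _ HV Hdec _ _ (Cn n)).
Qed.
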